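(* Let $r\ge1$ and let $\mathcal R_{2r\times 2r}$ be the grid graph with vertex set $\{0,1,\dots,2r-1\}^2\subset\mathbf{Z}^2$ and edges between vertices at Euclidean distance $1$. Let $s_i$ denote the edge between $(i,i)$ and $(i+1,i)$, for $i=0,1,\dots,r-1$ (the ''step-diagonal'' edges). If $G$ is obtained from $\mathcal R_{2r\times 2r}$ by deleting any $k$ of the edges $s_0,\dots,s_{r-1}$ (keeping all vertices), then $2^{r-k}$ divides $m_G$.
   Context: $m_G$ denotes the number of perfect matchings of the graph $G$. *)

(* Defs.v *)
From mathcomp Require Import all_boot.
Set Implicit Arguments. Unset Strict Implicit. Unset Printing Implicit Defensive.

(* A (finite simple) graph on a finType V is given by its edge set,
   a set of 2-element subsets of V. *)

Definition perfect_matching (V : finType) (E M : {set {set V}}) : bool :=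
  (M \subset E) && [forall v : V, #|[set e in M | v \in e]| == 1].

Definition num_pm (V : finType) (E : {set {set V}}) : nat :=
  #|[set M : {set {set V}} | perfect_matching E M]|.

Definition gridV (r : nat) : finType := ('I_(r.*2) * 'I_(r.*2))%type.

Definition grid_adj (r : nat) (u v : gridV r) : bool :=
  ((u.1 == v.1) && ((u.2.+1 == v.2 :> nat) || (v.2.+1 == u.2 :> nat)))
  || ((u.2 == v.2) && ((u.1.+1 == v.1 :> nat) || (v.1.+1 == u.1 :> nat))).

Definition is_step (r : nat) (S : {set 'I_r}) (u v : gridV r) : bool :=
  [exists i in S, [&& (u.1 == i :> nat), (u.2 == i :> nat),
                      (v.1 == i.+1 :> nat) & (v.2 == i :> nat)]].

Definition grid_minus_steps (r : nat) (S : {set 'I_r}) : {set {set gridV r}} :=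
  [set e : {set gridV r} | [exists u : gridV r, exists v : gridV r,
     [&& e == [set u; v], grid_adj u v, ~~ is_step S u v & ~~ is_step S v u]]].

(* Main.v *)
Require Import Defs.
From mathcomp Require Import all_boot zify.
Set Implicit Arguments. Unset Strict Implicit. Unset Printing Implicit Defensive.

Lemma count_pow2 (T : finType) (I : eqType) (i0 : I) (phi : I -> T -> T)
  (b : I -> T -> bool) n : forall (A : {set T}) (L : T -> seq I),
  (forall x i, x \in A -> i \in L x ->
     [/\ phi i x \in A, L (phi i x) = L x, phi i (phi i x) = x
       & b i (phi i x) = ~~ b i x]) ->
  (forall x i j, x \in A -> i \in L x -> j \in L x -> j != i -> b j (phi i x) = b j x) ->
  (forall x, x \in A -> uniq (L x) && (n <= size (L x))) ->
  2 ^ n %| #|A|.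
Proof.
elim: n => [|n IH] A L H1 H2 H3; first by rewrite expn0 dvd1n.
pose hd x := head i0 (L x).
have hdL x : x \in A -> hd x \in L x.
  move=> xA; have /andP[_] := H3 x xA; rewrite /hd.
  by case: (L x) => //= a s _; rewrite mem_head.
pose A0 := [set x in A | ~~ b (hd x) x].
pose A1 := [set x in A | b (hd x) x].
have cA : #|A| = #|A0| + #|A1|.
  rewrite -(cardID [pred x | ~~ b (hd x) x] A) /A0 /A1; congr (_ + _).
    by apply: eq_card => x; rewrite !inE andbC.
  by apply: eq_card => x; rewrite !inE andbC negbK.
have hdphi x : x \in A -> hd (phi (hd x) x) = hd x.
  by move=> xA; have [_ e _ _] := H1 x _ xA (hdL x xA); rewrite /hd e.
have c01 : #|A1| = #|A0|.
  have -> : A1 = [set phi (hd x) x | x in A0].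
    apply/setP => y; apply/idP/imsetP.
      rewrite inE => /andP[yA by_].
      have [pA _ pp pb] := H1 y _ yA (hdL y yA).
      exists (phi (hd y) y); first by rewrite inE pA /= (hdphi y yA) pb by_.
      by rewrite (hdphi y yA) pp.
    move=> [x]; rewrite inE => /andP[xA bx] ->.
    have [pA _ pp pb] := H1 x _ xA (hdL x xA).
    by rewrite inE pA /= (hdphi x xA) pb.
  apply: card_in_imset => x y; rewrite !inE => /andP[xA _] /andP[yA _] e.
  have [_ _ ppx _] := H1 x _ xA (hdL x xA).
  have [_ _ ppy _] := H1 y _ yA (hdL y yA).
  have e2 : hd x = hd y by rewrite -(hdphi x xA) e (hdphi y yA).
  by rewrite -ppx e e2 ppy.
have sub x i : x \in A -> i \in behead (L x) -> i \in L x /\ i != hd x.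
  move=> xA; have /andP[u _] := H3 x xA; rewrite /hd.
  case: (L x) u => //= a s /andP[na _] iS; rewrite inE iS orbT; split=> //.
  by apply: contraNneq na => <-.
have: 2 ^ n %| #|A0|.
  apply: (IH A0 (fun x => behead (L x))).
  - move=> x i; rewrite inE => /andP[xA bx] iL.
    have [iL' ne] := sub x i xA iL.
    have [pA pL pp pb] := H1 x i xA iL'.
    split=> //; last by rewrite pL.
    rewrite inE pA /=.
    have -> : hd (phi i x) = hd x by rewrite /hd pL.
    by rewrite H2 // ?hdL // eq_sym.
  - move=> x i j; rewrite inE => /andP[xA _] iL jL ne.
    have [iL' _] := sub x i xA iL; have [jL' _] := sub x j xA jL.
    exact: H2.
  - move=> x; rewrite inE => /andP[xA _]; have /andP[u s] := H3 x xA.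
    by apply/andP; split; [case: (L x) u => //= a l /andP[] | case: (L x) s].
by move=> h; rewrite cA c01 expnS addnn -muln2 mulnC dvdn_pmul2r.
Qed.
Section Grid.
Variables (r : nat) (S : {set 'I_r}).
Local Notation V := (gridV r).

Definition adjE (u w : V) := [&& grid_adj u w, ~~ is_step S u w & ~~ is_step S w u].
Definition good (m : {ffun V -> V}) := [forall v, (m (m v) == v) && adjE v (m v)].
Definition toM (m : {ffun V -> V}) : {set {set V}} := [set [set v; m v] | v : V].

Lemma adj_irr (u : V) : grid_adj u u = false.
Proof. rewrite /grid_adj; apply/negbTE; lia. Qed.

Lemma adj_sym (u w : V) : grid_adj u w = grid_adj w u.
Proof. rewrite /grid_adj -!val_eqE /=; apply/idP/idP; lia. Qed.

Lemma adjE_sym (u w : V) : adjE u w = adjE w u.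
Proof. by rewrite /adjE adj_sym; case: (is_step S u w); case: (is_step S w u); rewrite ?andbF. Qed.

Lemma adjE_neq (u w : V) : adjE u w -> u != w.
Proof. by case/andP=> a _; apply: contraTneq a => ->; rewrite adj_irr. Qed.

Lemma in2 (T : finType) (a b x : T) : x \in [set a; b] -> x = a \/ x = b.
Proof. by rewrite !inE => /orP[] /eqP; [left|right]. Qed.

Lemma inE_edge (u w : V) : ([set u; w] \in grid_minus_steps S) = adjE u w.
Proof.
rewrite inE; apply/existsP/idP; last first.
  by move=> a; exists u; apply/existsP; exists w; rewrite eqxx.
case=> u' /existsP [w' /and4P [/eqP e a n1 n2]].
have a' : adjE u' w' by rewrite /adjE a n1 n2.
have nuw := adjE_neq a'.
have Hu : u \in [set u'; w'] by rewrite -e !inE eqxx.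
have Hw : w \in [set u'; w'] by rewrite -e !inE eqxx orbT.
have Hu' : u' \in [set u; w] by rewrite e !inE eqxx.
have Hw' : w' \in [set u; w] by rewrite e !inE eqxx orbT.
case: (in2 Hu) => eu; case: (in2 Hw) => ew; subst.
- by case: (in2 Hw') => ew; rewrite ew eqxx in nuw.
- done.
- by rewrite adjE_sym.
- by case: (in2 Hu') => ew; rewrite ew eqxx in nuw.
Qed.

Lemma edge_form e : e \in grid_minus_steps S -> exists u w, e = [set u; w] /\ adjE u w.
Proof.
rewrite inE => /existsP [u /existsP [w /and4P [/eqP e' a n1 n2]]].
by exists u, w; rewrite /adjE a n1 n2.
Qed.

Lemma good_pm m : good m -> perfect_matching (grid_minus_steps S) (toM m).
Proof.
move=> /forallP g; apply/andP; split.
  apply/subsetP => e /imsetP [v _ ->]; rewrite inE_edge.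
  by case/andP: (g v).
apply/forallP => v; apply/eqP.
have -> : [set e in toM m | v \in e] = [set [set v; m v]].
  apply/setP => e; rewrite !inE; apply/andP/eqP.
    case=> /imsetP [w _ ->] /in2 [->|ev]; first done.
    have /andP [/eqP mm _] := g w.
    by rewrite ev mm setUC.
  by move=> ->; split; [apply/imsetP; exists v | rewrite !inE eqxx].
exact: cards1.
Qed.

Lemma toM_inj m1 m2 : good m1 -> good m2 -> toM m1 = toM m2 -> m1 = m2.
Proof.
move=> /forallP g1 /forallP g2 e; apply/ffunP => v.
have : [set v; m1 v] \in toM m2 by rewrite -e; apply/imsetP; exists v.
case/imsetP => w _ ew.
have /andP [/eqP mm2 _] := g2 w.
have /andP [_ /adjE_neq n1] := g1 v.
have Hv : v \in [set w; m2 w] by rewrite -ew !inE eqxx.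
have Hm : m1 v \in [set w; m2 w] by rewrite -ew !inE eqxx orbT.
case: (in2 Hv) => ev; subst.
  by case: (in2 Hm) => // h; rewrite h eqxx in n1.
by rewrite mm2; case: (in2 Hm) => // h; rewrite h eqxx in n1.
Qed.

Lemma pm_toM M : perfect_matching (grid_minus_steps S) M ->
  exists2 m, good m & M = toM m.
Proof.
case/andP => /subsetP sub /forallP cov.
have uniqe v e1 e2 : e1 \in M -> e2 \in M -> v \in e1 -> v \in e2 -> e1 = e2.
  move=> h1 h2 v1 v2; have /eqP c := cov v.
  have /card_le1_eqP := (eq_leq c); apply; by rewrite inE ?h1 ?h2.
have ex v : exists w, [set v; w] \in M.
  have /eqP c := cov v.
  have /card_gt0P [e] : 0 < #|[set e in M | v \in e]| by rewrite c.
  rewrite inE => /andP [eM ve].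
  have [u [w [ee _]]] := edge_form (sub e eM); subst e.
  by case: (in2 ve) => ->; [exists w | exists u; rewrite setUC].
pose m := [ffun v => odflt v [pick w | [set v; w] \in M]].
have mM v : [set v; m v] \in M.
  rewrite /m ffunE; case: pickP => [w //|/= h].
  by have [w hw] := ex v; rewrite h in hw.
have madj v : adjE v (m v) by rewrite -inE_edge; apply: sub.
have mm v : m (m v) = v.
  have ee : [set v; m v] = [set m v; m (m v)].
    by apply: (uniqe (m v)); rewrite ?mM // !inE eqxx ?orbT.
  have Hmm : m (m v) \in [set v; m v] by rewrite ee !inE eqxx orbT.
  have := adjE_neq (madj (m v)).
  by case: (in2 Hmm) => // ->; rewrite eqxx.
exists m.
  by apply/forallP => v; rewrite mm eqxx madj.
apply/setP => e; apply/idP/imsetP.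
  move=> eM; have [u [w [ee _]]] := edge_form (sub e eM); subst e.
  exists u => //; apply: (uniqe u) => //; by rewrite !inE eqxx.
by case=> v _ ->.
Qed.

Lemma num_pm_good : num_pm (grid_minus_steps S) = #|[set m | good m]|.
Proof.
rewrite /num_pm.
have -> : [set M | perfect_matching (grid_minus_steps S) M] = toM @: [set m | good m].
  apply/setP => M; rewrite inE; apply/idP/imsetP.
    by case/pm_toM => m g ->; exists m; rewrite ?inE.
  by case=> m; rewrite inE => g ->; apply: good_pm.
apply: card_in_imset => m1 m2; rewrite !inE; exact: toM_inj.
Qed.

Definition sw (p : V) : V := (p.2, p.1).
Definition fm (m : {ffun V -> V}) (x : V) : V := sw (m x).
Definition flip (m : {ffun V -> V}) (d : V) : {ffun V -> V} :=
  [ffun x => if fconnect (fm m) d x then sw (m (sw x)) else m x].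
Definition fixp (x : V) := sw x == x.
Definition blocked (m : {ffun V -> V}) (x : V) :=
  [exists i in S, [&& x.1 == i :> nat, x.2 == i :> nat &
     (((m x).1 == i :> nat) && ((m x).2 == i.+1 :> nat)) ||
     (((m x).1 == i.+1 :> nat) && ((m x).2 == i :> nat))]].
Definition free (m : {ffun V -> V}) (d : V) :=
  [forall x, (fconnect (fm m) d x && fixp x) ==> ~~ blocked m x].

Lemma swK : involutive sw. Proof. by case. Qed.

Lemma adj_sw u w : grid_adj (sw u) (sw w) = grid_adj u w.
Proof. case: u w => [a b] [c e]; rewrite /grid_adj /= -!val_eqE /=; apply/idP/idP; lia. Qed.

Lemma conn_ind (T : finType) (g : T -> T) (P : T -> Prop) x :
  P x -> (forall z, fconnect g x z -> P z -> P (g z)) ->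
  forall y, fconnect g x y -> P y.
Proof.
move=> Px step y /iter_findex <-; elim: (findex g x y) => //= n IH.
by apply: step => //; exact: fconnect_iter.
Qed.

Lemma conn_eqv (T : finType) (g : T -> T) : injective g ->
  forall a b c, fconnect g a b -> fconnect g a c = fconnect g b c.
Proof.
move=> gi a b c ab; apply/idP/idP => h; last exact: connect_trans ab h.
by apply: connect_trans h; rewrite fconnect_sym.
Qed.

Lemma fconn_step (T : finType) (g : T -> T) a z :
  fconnect g a z -> fconnect g a (g z).
Proof. by move=> h; apply: connect_trans h (fconnect1 _ _). Qed.

Lemma fm_injg (m : {ffun V -> V}) : (forall v, m (m v) = v) -> injective (fm m).
Proof. by move=> mi x y /(can_inj swK) e; rewrite -(mi x) e mi. Qed.

Section Orbit.
Variables (m : {ffun V -> V}) (mi : forall v, m (m v) = v).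

Lemma fm_inj : injective (fm m).
Proof. exact: fm_injg. Qed.

Variables (d : V) (dfix : sw d = d).
Local Notation O := (fconnect (fm m) d).

Lemma O_sw x : O x -> O (sw x).
Proof.
apply: (@conn_ind _ _ (fun x => O (sw x))); first by rewrite dfix connect0.
move=> z _ h.
have e : fm m (sw (fm m z)) = sw z by rewrite /fm swK mi.
have : fconnect (fm m) (sw (fm m z)) (sw z) by rewrite -e fconnect1.
by rewrite fconnect_sym; [exact: connect_trans | exact: fm_inj].
Qed.

Lemma O_m x : O x -> O (m x).
Proof. by move=> h; rewrite -[m x]swK; apply/O_sw/fconn_step. Qed.

Lemma O_mN x : ~~ O x -> ~~ O (m x).
Proof. by apply: contra => /O_m; rewrite mi. Qed.

Local Notation m' := (flip m d).

Lemma flipE x : m' x = if O x then sw (m (sw x)) else m x.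
Proof. by rewrite ffunE. Qed.

Lemma flip_invol x : m' (m' x) = x.
Proof.
rewrite [m' x]flipE; case: ifP => Ox.
  have Oy : O (sw (m (sw x))) by apply/O_sw/O_m/O_sw.
  by rewrite flipE Oy swK mi swK.
by rewrite flipE (negbTE (O_mN (negbT Ox))) mi.
Qed.

Lemma flip_orbit_d x : fconnect (fm m') d x = O x.
Proof.
have fO z : O z -> fm m' z = m (sw z) by move=> Oz; rewrite /fm flipE Oz swK.
apply/idP/idP.
  apply: (@conn_ind _ _ (fun x => O x)); first exact: connect0.
  by move=> z _ Oz; rewrite fO //; apply/O_m/O_sw.
apply: (@conn_ind _ _ (fun x => fconnect (fm m') d x)); first exact: connect0.
move=> z Oz h.
have e : fm m' (fm m z) = z by rewrite fO ?fconn_step // /fm swK mi.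
have : fconnect (fm m') (fm m z) z by rewrite -{2}e fconnect1.
rewrite fconnect_sym; last exact: (fm_injg flip_invol).
exact: connect_trans.
Qed.

Lemma flip_orbit y x : fconnect (fm m') y x = fconnect (fm m) y x.
Proof.
case Oy: (O y).
  have Oy' : fconnect (fm m') d y by rewrite flip_orbit_d.
  rewrite -(conn_eqv (fm_injg flip_invol) x Oy') -(conn_eqv fm_inj x Oy).
  exact: flip_orbit_d.
have notO z : fconnect (fm m) y z -> ~~ O z.
  move=> yz; apply: contraFN Oy => Oz.
  by apply: connect_trans Oz _; rewrite fconnect_sym //; exact: fm_inj.
have it n : iter n (fm m') y = iter n (fm m) y.
  elim: n => //= n ->; rewrite /fm flipE.
  by rewrite (negbTE (notO _ (fconnect_iter _ _ _))).
apply/idP/idP.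
  by move/iter_findex <-; rewrite it fconnect_iter.
by move/iter_findex <-; rewrite -it fconnect_iter.
Qed.

Lemma flip_flip : flip m' d = m.
Proof.
apply/ffunP => x; rewrite ffunE flip_orbit.
case: ifP => Ox; rewrite flipE ?Ox //.
by rewrite O_sw // !swK.
Qed.


Lemma fixpP (z : V) : z.1 = z.2 :> nat -> sw z = z.
Proof. by case: z => a b /= e; rewrite /sw /= (val_inj e). Qed.

Lemma fixp12 (z : V) : sw z = z -> z.1 = z.2 :> nat.
Proof. by case: z => a b [->]. Qed.

Lemma flip_other x : ~~ O x -> m' x = m x.
Proof. by move=> h; rewrite flipE (negbTE h). Qed.

Lemma flip_good : good m -> free m d -> good m'.
Proof.
move=> /forallP g /forallP fr.
have nob z : O z -> sw z = z -> ~~ blocked m z.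
  by move=> Oz fz; have := fr z; rewrite Oz /fixp fz eqxx.
have claim z i : O z -> i \in S -> z.1 = i :> nat -> z.2 = i :> nat ->
    (m' z).1 = i.+1 :> nat -> (m' z).2 = i :> nat -> False.
  move=> Oz iS e1 e2 e3 e4.
  have fz : sw z = z by apply: fixpP; rewrite e1 e2.
  move: e3 e4; rewrite flipE Oz fz /= => e3 e4.
  have := nob z Oz fz; rewrite /blocked; case/existsP; exists i.
  by rewrite iS e1 e2 e3 e4 !eqxx.
apply/forallP => x; rewrite flip_invol eqxx /=.
case Ox: (O x); last first.
  by rewrite flip_other ?Ox //; case/andP: (g x).
have /andP [_ /and3P [a n1 n2]] := g (sw x).
have Om'x : O (m' x) by rewrite flipE Ox; apply/O_sw/O_m/O_sw.
have ex : m' x = sw (m (sw x)) by rewrite flipE Ox.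
apply/and3P; split.
- by rewrite ex -adj_sw swK.
- apply/negP => /existsP [i /andP [iS /and4P [/eqP e1 /eqP e2 /eqP e3 /eqP e4]]].
  exact: (claim x i).
- apply/negP => /existsP [i /andP [iS /and4P [/eqP e1 /eqP e2 /eqP e3 /eqP e4]]].
  by apply: (claim (m' x) i) => //; rewrite flip_invol.
Qed.

Definition bup (m : {ffun V -> V}) (x : V) := (m x).1 < (m x).2.

Lemma flip_b : good m -> bup m' d = ~~ bup m d.
Proof.
move=> /forallP g; have /andP [_ /andP [a _]] := g d.
have e := fixp12 dfix.
rewrite /bup flipE connect0 dfix /=.
move: a; rewrite /grid_adj -!val_eqE /=; case: (m d) => p q /=; move: e; case: d => c c2 /= e. lia.
Qed.

Lemma flip_blocked x : sw x = x -> blocked m' x = blocked m x.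
Proof.
move=> fx; rewrite /blocked flipE; case: ifP => // _; rewrite fx.
by apply: eq_existsb => i /=; apply/idP/idP; lia.
Qed.

Lemma flip_free y : free m' y = free m y.
Proof.
rewrite /free; apply: eq_forallb => x; rewrite flip_orbit.
by case fx: (fixp x); rewrite ?andbF ?andbT // flip_blocked //; apply/eqP.
Qed.

Lemma iter_f_finv (T : finType) (g : T -> T) (gi : injective g) n y :
  iter n g (iter n (finv g) y) = y.
Proof. by elim: n y => // n IH y; rewrite iterSr [iter n.+1 (finv g) y]iterS f_finv. Qed.

Lemma fix_le2 : #|[set x | O x && fixp x]| <= 2.
Proof.
set f := fm m; set Lo := order f d.
have sw_f z : sw (f z) = finv f (sw z).
  have e : f (sw (f z)) = sw z by rewrite /f /fm swK mi.
  by rewrite -e finv_f //; exact: fm_inj.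
have sw_it j : sw (iter j f d) = iter j (finv f) d.
  by elim: j => [|j IH] /=; rewrite ?dfix // sw_f IH.
have only0 n : n < Lo -> iter n f d = d -> n = 0.
  by move=> nL e; have := findex_iter nL; rewrite e findex0.
have : [set x | O x && fixp x] \subset [set d; iter Lo./2 f d].
  apply/subsetP => x; rewrite !inE => /andP [Ox /eqP fx].
  move: (findex_max Ox) (iter_findex Ox); move: (findex f d x) => j jL ex; rewrite -/f -/Lo in jL ex.
  have e2 : iter (j + j) f d = d.
    by rewrite iterD ex -{1}fx -ex sw_it iter_f_finv //; exact: fm_inj.
  case: (ltnP (j + j) Lo) => h.
    have j0 := only0 _ h e2; rewrite -ex (_ : j = 0) /= ?eqxx //; lia.
  have e3 : iter (j + j - Lo) f d = d.
    by rewrite -{2}e2 -{2}(subnK h) iterD iter_order //; exact: fm_inj.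
  have j0 : j + j - Lo = 0 by apply: only0 => //; lia.
  have -> : Lo./2 = j by rewrite (_ : Lo = j.*2) ?doubleK //; lia.
  by rewrite -ex eqxx orbT.
move/subset_leq_card; rewrite cards2; case: (_ != _) => //= h.
exact: leq_trans h _.
Qed.

End Orbit.

Definition rep (m : {ffun V -> V}) (d : V) :=
  fixp d && [forall x, (fconnect (fm m) d x && fixp x) ==> (enum_rank d <= enum_rank x)].
Definition Lst (m : {ffun V -> V}) := enum [set d | rep m d && free m d].

Lemma memLst (m : {ffun V -> V}) (d : V) : (d \in Lst m) = rep m d && free m d.
Proof. by rewrite /Lst mem_enum inE. Qed.

Lemma rep_uniq (m : {ffun V -> V}) (a b : V) : (forall v, m (m v) = v) -> rep m a -> rep m b ->
  fconnect (fm m) a b -> a = b.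
Proof.
move=> mi /andP [fa /forallP ra] /andP [fb /forallP rb] ab.
have ba : fconnect (fm m) b a by rewrite fconnect_sym //; exact: fm_injg.
apply: enum_rank_inj; apply: val_inj; apply/eqP; rewrite /= eqn_leq.
by have := ra b; rewrite ab fb /= => -> ; have := rb a; rewrite ba fa.
Qed.

Lemma rep_flip (m : {ffun V -> V}) (d y : V) : (forall v, m (m v) = v) -> sw d = d ->
  rep (flip m d) y = rep m y.
Proof.
move=> mi dfix; rewrite /rep; congr (_ && _); apply: eq_forallb => x.
by rewrite flip_orbit.
Qed.

Lemma Lst_flip (m : {ffun V -> V}) (d : V) : (forall v, m (m v) = v) -> sw d = d -> Lst (flip m d) = Lst m.
Proof.
move=> mi dfix; apply: eq_enum => y; rewrite !inE rep_flip //.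
by rewrite flip_free.
Qed.

Lemma xeq (x y : V) : x.1 = y.1 :> nat -> x.2 = y.2 :> nat -> x = y.
Proof. by case: x y => a b [c e] /= /val_inj -> /val_inj ->. Qed.

Lemma card_FP : #|[set x : V | fixp x]| = r.*2.
Proof.
have -> : [set x : V | fixp x] = [set (i, i) | i : 'I_(r.*2)].
  apply/setP => x; rewrite inE; apply/eqP/imsetP.
    move=> fx; exists x.1 => //; have e := fixp12 fx.
    by apply: xeq.
  by case=> i _ ->.
by rewrite card_imset ?card_ord // => i j [].
Qed.

Lemma rep_exists (m : {ffun V -> V}) (x : V) : (forall v, m (m v) = v) -> fixp x ->
  exists y, rep m y && fconnect (fm m) x y.
Proof.
move=> mi fx.
have Px : (fun y => fixp y && fconnect (fm m) x y) x by rewrite fx connect0.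
case: (@arg_minnP _ x (fun y => fixp y && fconnect (fm m) x y) (fun y => enum_rank y) Px).
move=> y /andP [fy xy] ymin; exists y; rewrite xy andbT /rep fy /=.
apply/forallP => z; apply/implyP => /andP [yz fz]; apply: ymin.
by rewrite fz (connect_trans xy yz).
Qed.

Lemma reps_ge (m : {ffun V -> V}) : (forall v, m (m v) = v) -> r.*2 <= 2 * #|[set d | rep m d]|.
Proof.
move=> mi.
pose h x := odflt x [pick y | rep m y && fconnect (fm m) x y].
have hP x : fixp x -> rep m (h x) && fconnect (fm m) x (h x).
  move=> fx; rewrite /h; case: pickP => [y //|/= none].
  by have [y hy] := rep_exists mi fx; rewrite none in hy.
rewrite -card_FP -sum1_card (partition_big_imset h).
apply: (@leq_trans (\sum_(j in h @: [set x | fixp x]) 2)).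
  apply: leq_sum => j /imsetP [x0 x0F ->].
  have fx0 : fixp x0 by move: x0F; rewrite inE.
  have /andP [/andP [fj _] _] := hP x0 fx0.
  rewrite sum1dep_card; apply: leq_trans (fix_le2 mi (eqP fj)).
  apply: subset_leq_card; apply/subsetP => x; rewrite !inE => /andP [fx /eqP e].
  have /andP [_ xh] := hP x fx.
  rewrite fx andbT -e fconnect_sym //; exact: fm_injg.
rewrite sum_nat_const mulnC leq_pmul2l //; apply: subset_leq_card.
apply/subsetP => j /imsetP [x xF ->]; rewrite inE.
have fx0 : fixp x by move: xF; rewrite inE.
by have /andP [] := hP x fx0.
Qed.

Lemma nonfree_le (m : {ffun V -> V}) : (forall v, m (m v) = v) ->
  #|[set d | rep m d && ~~ free m d]| <= #|S|.
Proof.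
move=> mi.
pose P d (i : 'I_r) := [exists x, [&& fconnect (fm m) d x, fixp x, i \in S,
   x.1 == i :> nat & x.2 == i :> nat]].
pose g d := [pick i | P d i].
have gP d : rep m d && ~~ free m d -> exists2 i, g d = Some i & P d i.
  case/andP => _ /forallPn [x]; rewrite negb_imply negbK => /andP [/andP [dx fx] bx].
  rewrite /g; case: pickP => [i pi|none]; first by exists i.
  case/existsP: bx => i /andP [iS /and3P [/eqP e1 /eqP e2 _]].
  have := none i; rewrite /P => /existsP; case; exists x.
  by rewrite dx fx iS e1 e2 !eqxx.
rewrite -(card_in_imset (f := g)); last first.
  move=> a b; rewrite !inE => na nb e.
  have [i ga pa] := gP a na; have [j gb pb] := gP b nb.
  move: e; rewrite ga gb => -[eij]; subst j.
  case/existsP: pa => x /and5P [ax _ _ /eqP x1 /eqP x2].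
  case/existsP: pb => y /and5P [bybb _ _ /eqP y1 /eqP y2].
  have exy : x = y by apply: xeq; rewrite ?x1 ?x2 ?y1 ?y2.
  subst y; apply: (rep_uniq mi (andP na).1 (andP nb).1).
  apply: connect_trans ax _; rewrite fconnect_sym //; exact: fm_injg.
rewrite -(card_imset S (@Some_inj _)); apply: subset_leq_card.
apply/subsetP => o /imsetP [a na ->]; rewrite inE in na.
have [i -> pa] := gP a na; apply/imsetP; exists i => //.
by case/existsP: pa => x /and5P [].
Qed.

Lemma size_Lst (m : {ffun V -> V}) : (forall v, m (m v) = v) -> r - #|S| <= size (Lst m).
Proof.
move=> mi; rewrite /Lst -cardE.
have h1 := reps_ge mi; have h2 := nonfree_le mi.
have e : #|[set d | rep m d]| = #|[set d | rep m d && free m d]| + #|[set d | rep m d && ~~ free m d]|.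
  rewrite -(cardID [set d | free m d] [set d | rep m d]); congr (_ + _);
  by apply: eq_card => x; rewrite !inE andbC.
lia.
Qed.

End Grid.

Unset Implicit Arguments.

Theorem proposition3p7 (r k : nat) (S : {set 'I_r}) :
  1 <= r -> #|S| = k ->
  2 ^ (r - k) %| num_pm (grid_minus_steps S).
Proof.
move=> r1 <-; rewrite num_pm_good.
have h0 : 0 < r.*2 by rewrite -addnn; lia.
have miP (m : {ffun gridV r -> gridV r}) : good S m -> forall v, m (m v) = v.
  by move=> gm v; move/forallP: gm => /(_ v) /andP [/eqP].
apply: (@count_pow2 _ _ ((Ordinal h0, Ordinal h0) : gridV r) (fun d m => flip m d) (fun d m => bup m d) (r - #|S|)
   [set m | good S m] (fun m => Lst S m)).
- move=> m d; rewrite inE memLst => gm /andP [rd frd].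
  have fd : fixp d by case/andP: rd.
  have mi := miP m gm.
  have dfix : sw d = d := eqP fd.
  split.
  + by rewrite inE; exact: flip_good.
  + exact: Lst_flip.
  + exact: flip_flip.
  + by have := flip_b dfix gm.
- move=> m i j; rewrite inE !memLst => gm /andP [ri _] /andP [rj _] ne.
  have mi := miP m gm.
  have dfix : sw i = i by case/andP: ri => /eqP.
  rewrite /bup flip_other //; apply: contra ne => ij.
  by rewrite (rep_uniq mi ri rj ij).
- move=> m; rewrite inE => gm; rewrite enum_uniq /=.
  exact: size_Lst (miP m gm).
Qed.
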